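(* Let $f\in K[X]$ be a regular polynomial with exactly $t+1$ nonzero monomial terms. Then the number of roots of $f$ in $K^\ast=K\setminus\{0\}$ is at most $t(q-1)$, and all roots of $f$ in $K^\ast$ are simple.
   Context: $K$ is a field complete with respect to a non-archimedean discrete valuation $v$, normalized by $v(\pi)=1$ for a uniformizer $\pi$ of the valuation ring $A=\{x\in K: v(x)\geq 0\}$; the residue field $\kappa=A/\pi A$ is finite with $q$ elements and characteristic $p$. For $h=\sum_{i=0}^d c_iX^i\in K[X]$, the Newton polygon of $h$ is the convex hull of the points $(i,v(c_i))$ with $c_i\neq 0$. An edge of a polygon in $\mathbb{R}^2$ is a lower edge if it has an inner normal vector with positive second coordinate. $h$ is regular if for every lower edge $S$ of its Newton polygon, with vertices $(s,v(c_s))$ and $(s',v(c_{s'}))$, $s>s'$: (1) $S$ contains exactly two points of the set $\{(i,v(c_i)) : 0\leq i\leq d,\ c_i\neq 0\}$; (2) $p\nmid (s-s')$. *)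

(* Defs.v *)
From HB Require Import structures.
From mathcomp Require Import all_boot all_order all_algebra.
Set Implicit Arguments. Unset Strict Implicit. Unset Printing Implicit Defensive.
Import Order.TTheory GRing.Theory Num.Theory.
Local Open Scope ring_scope.

(* The valuation v is only meaningful on nonzero elements (v 0 = +oo by
   convention); all conditions below treat 0 separately. *)

Definition vge (K : fieldType) (v : K -> int) (N : int) (x : K) : bool :=
  (x == 0) || (N <= v x).

Definition inA (K : fieldType) (v : K -> int) (x : K) : bool := vge v 0 x.
Definition inM (K : fieldType) (v : K -> int) (x : K) : bool := vge v 1 x.

Record complete_dvf (K : fieldType) (v : K -> int) (p q : nat) : Prop := {
  v_mul : forall x y : K, x != 0 -> y != 0 -> v (x * y) = v x + v y;
  v_add : forall x y : K, x != 0 -> y != 0 -> x + y != 0 ->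
            Num.min (v x) (v y) <= v (x + y);
  v_uniformizer : exists pi : K, pi != 0 /\ v pi = 1;
  v_complete : forall u : nat -> K,
      (forall N : int, exists M : nat, forall m n : nat,
          (M <= m)%N -> (M <= n)%N -> vge v N (u m - u n)) ->
      exists l : K, forall N : int, exists M : nat, forall n : nat,
          (M <= n)%N -> vge v N (u n - l);
  (* residue field has exactly q elements: a system of q pairwise
     incongruent representatives in A covering A modulo pi A *)
  residue_card : exists r : seq K,
      [/\ size r = q, all (inA v) r,
          pairwise (fun a b => ~~ inM v (a - b)) r
        & forall a : K, inA v a -> has (fun b => inM v (a - b)) r];
  residue_prime : prime p;
  residue_char : inM v (p%:R : K)
}.

(* Newton polygon: points (i, v c_i) for c_i != 0.  The point (i, v c_i)
   lies on or above the line through (s', v c_s') and (s, v c_s), s' < s. *)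
Definition on_or_above (K : fieldType) (v : K -> int) (f : {poly K})
    (s' s i : nat) : bool :=
  (v f`_s - v f`_s') * (i%:Z - s'%:Z) <= (v f`_i - v f`_s') * (s%:Z - s'%:Z).

Definition on_line (K : fieldType) (v : K -> int) (f : {poly K})
    (s' s i : nat) : bool :=
  (v f`_s - v f`_s') * (i%:Z - s'%:Z) == (v f`_i - v f`_s') * (s%:Z - s'%:Z).

(* A lower edge of the Newton polygon with vertices (s', v c_s'), (s, v c_s),
   s' < s: the line through them supports the convex hull from below (so its
   inner normal has positive second coordinate) and the face it cuts out is
   exactly the segment between these two points (they are its endpoints). *)
Definition lower_edge (K : fieldType) (v : K -> int) (f : {poly K})
    (s' s : nat) : Prop :=
  [/\ (s' < s)%N, f`_s' != 0, f`_s != 0,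
      forall i : nat, f`_i != 0 -> on_or_above v f s' s i
    & forall i : nat, f`_i != 0 -> on_line v f s' s i -> (s' <= i <= s)%N].

Definition regular (K : fieldType) (v : K -> int) (p : nat) (f : {poly K})
    : Prop :=
  forall s' s : nat, lower_edge v f s' s ->
    (forall i : nat, f`_i != 0 -> on_line v f s' s i -> i = s' \/ i = s)
    /\ ~~ (p %| s - s')%N.

(* Main.v *)
Require Import Defs.
From HB Require Import structures.
From mathcomp Require Import all_boot all_order all_algebra.
From mathcomp Require Import zify ring lra.
Set Implicit Arguments. Unset Strict Implicit. Unset Printing Implicit Defensive.
Import Order.TTheory GRing.Theory Num.Theory.
Local Open Scope ring_scope.
Lemma Lident (a b c w : int) (J S I : nat) : b + S%:Z * w = a + J%:Z * w ->
  (c - a) * (S%:Z - J%:Z) - (b - a) * (I%:Z - J%:Z) =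
  (c + I%:Z * w - (a + J%:Z * w)) * (S%:Z - J%:Z).
Proof.
move=> h; have -> : b = a + J%:Z * w - S%:Z * w by rewrite -h addrK.
ring.
Qed.

Lemma L_above (a b c w : int) (J S I : nat) : b + S%:Z * w = a + J%:Z * w ->
  a + J%:Z * w <= c + I%:Z * w -> (J < S)%N ->
  (b - a) * (I%:Z - J%:Z) <= (c - a) * (S%:Z - J%:Z).
Proof.
move=> h h1 h2; rewrite -subr_ge0 (Lident c I h); apply: mulr_ge0.
  by rewrite subr_ge0.
by rewrite subr_ge0 lez_nat ltnW.
Qed.

Lemma L_online (a b c w : int) (J S I : nat) : b + S%:Z * w = a + J%:Z * w ->
  (J < S)%N ->
  ((b - a) * (I%:Z - J%:Z) == (c - a) * (S%:Z - J%:Z)) = (c + I%:Z * w == a + J%:Z * w).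
Proof.
move=> h h2; rewrite eq_sym -subr_eq0 (Lident c I h) mulf_eq0 subr_eq0.
have -> : (S%:Z - J%:Z == 0) = false by apply/negbTE; rewrite subr_eq0 eqz_nat neq_ltn h2 orbT.
by rewrite orbF.
Qed.

Lemma L_cross (a b w1 w2 : int) (J S : nat) : b + S%:Z * w2 = a + J%:Z * w2 ->
  (J < S)%N -> a + J%:Z * w1 < b + S%:Z * w1 -> w2 < w1.
Proof.
move=> h h2 h3.
have : 0 < (S%:Z - J%:Z) * (w1 - w2).
  have -> : (S%:Z - J%:Z) * (w1 - w2) = b + S%:Z * w1 - (a + J%:Z * w1).
    have -> : b = a + J%:Z * w2 - S%:Z * w2 by rewrite -h addrK.
    ring.
  by rewrite subr_gt0.
rewrite pmulr_rgt0 ?subr_gt0 //.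
Qed.

Lemma L_same (a b w1 w2 : int) (J S : nat) : b + S%:Z * w1 = a + J%:Z * w1 ->
  b + S%:Z * w2 = a + J%:Z * w2 -> (J < S)%N -> w1 = w2.
Proof.
move=> h1 h2 h3.
have e : b = a + J%:Z * w2 - S%:Z * w2 by rewrite -h2 addrK.
rewrite e in h1.
have : (S%:Z - J%:Z) * (w1 - w2) = 0.
  have -> : (S%:Z - J%:Z) * (w1 - w2) = (a + J%:Z * w2 - S%:Z * w2 + S%:Z * w1) - (a + J%:Z * w1) by ring.
  by rewrite h1 subrr.
move/eqP; rewrite mulf_eq0 subr_eq0 eqz_nat => /orP [h|]; first by move: h3; rewrite ltn_neqAle eq_sym h.
by rewrite subr_eq0 => /eqP.
Qed.

Section Val.
Variables (K : fieldType) (v : K -> int) (p q : nat).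
Hypothesis HK : complete_dvf v p q.

Lemma v1 : v 1 = 0.
Proof.
have := v_mul HK (oner_neq0 K) (oner_neq0 K); rewrite mulr1 => h.
move: h; rewrite -{1}[v 1]addr0 => /addrI; done.
Qed.

Lemma vN1 : v (-1) = 0.
Proof.
have h1 : (-1 : K) != 0 by rewrite oppr_eq0 oner_neq0.
have := v_mul HK h1 h1; rewrite mulrNN mulr1 v1 => h; lia.
Qed.

Lemma vN x : x != 0 -> v (- x) = v x.
Proof.
move=> hx; have h1 : (-1 : K) != 0 by rewrite oppr_eq0 oner_neq0.
by rewrite -mulN1r (v_mul HK h1 hx) vN1 add0r.
Qed.

Lemma vX x n : x != 0 -> v (x ^+ n) = n%:Z * v x.
Proof.
move=> hx; elim: n => [|n IH]; first by rewrite expr0 v1 mul0r.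
rewrite exprS (v_mul HK hx) ?expf_neq0 // IH; lia.
Qed.

Lemma vV x : x != 0 -> v (x^-1) = - v x.
Proof.
move=> hx; have := v_mul HK hx (invr_neq0 hx); rewrite mulfV // v1 => h; lia.
Qed.

Lemma vge0 N : vge v N 0.
Proof. by rewrite /vge eqxx. Qed.

Lemma vge_le N M x : N <= M -> vge v M x -> vge v N x.
Proof. by move=> hNM; rewrite /vge => /orP [->//|h]; apply/orP; right; apply: le_trans h. Qed.

Lemma vgeD N x y : vge v N x -> vge v N y -> vge v N (x + y).
Proof.
rewrite /vge; case: (eqVneq x 0) => [->|hx]; first by rewrite add0r.
case: (eqVneq y 0) => [->|hy]; first by rewrite addr0 (negbTE hx) => h _.
case: (eqVneq (x + y) 0) => //= hxy hNx hNy.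
have := v_add HK hx hy hxy; rewrite ge_min => /orP [] h; exact: le_trans h.
Qed.

Lemma vgeN N x : vge v N x -> vge v N (- x).
Proof.
rewrite /vge; case: (eqVneq x 0) => [->|hx] /=; first by rewrite oppr0 eqxx.
by rewrite oppr_eq0 (negbTE hx) vN.
Qed.

Lemma vgeB N x y : vge v N x -> vge v N y -> vge v N (x - y).
Proof. by move=> hx hy; apply: vgeD => //; apply: vgeN. Qed.

Lemma vgeM N M x y : vge v N x -> vge v M y -> vge v (N + M) (x * y).
Proof.
rewrite /vge; case: (eqVneq x 0) => [->|hx] /=; first by rewrite mul0r eqxx.
case: (eqVneq y 0) => [->|hy] /=; first by rewrite mulr0 eqxx.
by rewrite mulf_eq0 (negbTE hx) (negbTE hy) (v_mul HK hx hy) /= => h1 h2; apply: lerD.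
Qed.

Lemma vgeX N x n : vge v N x -> vge v (n%:Z * N) (x ^+ n).
Proof.
move=> h; elim: n => [|n IH]; first by rewrite expr0 /vge v1 mul0r lexx orbT.
rewrite exprS; have -> : (n.+1%:Z * N) = N + n%:Z * N by lia.
exact: vgeM.
Qed.

Lemma vgev x : vge v (v x) x.
Proof. by rewrite /vge lexx orbT. Qed.

Lemma vge_nat n : vge v 0 (n%:R : K).
Proof.
elim: n => [|n IH]; first exact: vge0.
by rewrite -addn1 natrD; apply: vgeD => //; rewrite /vge v1 lexx orbT.
Qed.

Lemma vge_sum (I : Type) (r : seq I) (P : pred I) (F : I -> K) N :
  (forall i, P i -> vge v N (F i)) -> vge v N (\sum_(i <- r | P i) F i).
Proof.
move=> h; apply: (big_ind (vge v N)) => //; [exact: vge0 | exact: vgeD].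
Qed.

Lemma key_neq0 a e : a != 0 -> vge v (v a + 1) e -> a + e != 0.
Proof.
move=> ha he; apply/eqP => hae.
have : e = - a by apply/eqP; rewrite -subr_eq0 opprK addrC hae.
move=> hE; move: he; rewrite hE /vge oppr_eq0 (negbTE ha) vN //=; lia.
Qed.

Lemma vnat_coprime n : ~~ (p %| n)%N -> (n%:R : K) != 0 /\ v n%:R = 0.
Proof.
move=> hpn.
have hM : ~~ inM v (n%:R : K).
  apply/negP => hM.
  have hp0 : (0 < p)%N by apply: prime_gt0 (residue_prime HK).
  have [a _ hdvd] := Bezoutl n hp0.
  have hcop : coprime p n by rewrite prime_coprime // (residue_prime HK).
  move: hdvd; rewrite (eqP hcop) => /dvdnP [k hk].
  have h1 : (1 : K) = k%:R * p%:R - a%:R * n%:R.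
    by rewrite -!natrM -hk natrD addrK.
  have : vge v 1 (1 : K).
    rewrite h1; apply: vgeB.
      by rewrite -[1]add0r; apply: vgeM; [apply: vge_nat | apply: (residue_char HK)].
    by rewrite -[1]add0r; apply: vgeM => //; apply: vge_nat.
  by rewrite /vge oner_eq0 v1.
move: hM (vge_nat n); rewrite /inM /vge negb_or => /andP [hnz h1] h0.
move: h0; rewrite (negbTE hnz) /= => h0.
split => //; lia.
Qed.


Lemma sum2 (R : zmodType) n (F : nat -> R) j s : (j < n)%N -> (s < n)%N -> j != s ->
  \sum_(i < n) F i = F j + F s + \sum_(i < n | (i != j :> nat) && (i != s :> nat)) F i.
Proof.
move=> hj hs hjs.
rewrite (bigD1 (Ordinal hj)) //= (bigD1 (Ordinal hs)) //=. 
rewrite addrA; congr (_ + _); apply: eq_bigl => i.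
by rewrite -(inj_eq val_inj) /= eq_sym.
Qed.

Section Poly.
Variable f : {poly K}.

Definition val (x : K) (i : nat) : int := v f`_i + i%:Z * v x.

Definition edgeb x j s : bool :=
  [&& (j < s)%N, f`_j != 0, f`_s != 0, val x j == val x s,
      all (fun i => [|| f`_i == 0, i == j, i == s | val x j < val x i])
        (iota 0 (size f))
    & ~~ (p %| s - j)%N].

Lemma coef_lt_size i : f`_i != 0 -> (i < size f)%N.
Proof. by apply: contraR; rewrite -leqNgt => h; rewrite nth_default. Qed.

Lemma edge_lt x j s i : edgeb x j s -> f`_i != 0 -> i != j -> i != s ->
  val x j < val x i.
Proof.
case/and5P => _ _ _ _ /andP [/allP h _] hi hij his.
have := h i; rewrite mem_iota add0n coef_lt_size // => /(_ isT).
by rewrite (negbTE hi) (negbTE hij) (negbTE his).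
Qed.

Lemma edge_le x j s i : edgeb x j s -> f`_i != 0 -> val x j <= val x i.
Proof.
move=> he hi; case: (eqVneq i j) => [->//|hij].
case: (eqVneq i s) => [->|his]; last by apply/ltW; apply: edge_lt he hi hij his.
by case/and5P: he => _ _ _ /eqP -> _.
Qed.

Lemma vterm x i : x != 0 -> f`_i != 0 -> v (f`_i * x ^+ i) = val x i.
Proof. by move=> hx hi; rewrite (v_mul HK hi) ?expf_neq0 // vX. Qed.

Lemma vge_term x i N : x != 0 -> (f`_i != 0 -> N <= val x i) ->
  vge v N (f`_i * x ^+ i).
Proof.
move=> hx h; case: (eqVneq f`_i 0) => [->|hi]; first by rewrite mul0r vge0.
by apply: vge_le (h hi) _; rewrite -vterm // vgev.
Qed.

Lemma nondeg x j s e : x != 0 -> root f x -> edgeb x j s ->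
  vge v (val x j + 1) e -> \sum_(i < size f) (f`_i * x ^+ i) *+ i + e != 0.
Proof.
move=> hx hr he hE.
have /and5P [hjs hj hs /eqP hv /andP [_ hp]] := he.
have hjn := coef_lt_size hj; have hsn := coef_lt_size hs.
have hjs' : j != s by rewrite neq_ltn hjs.
set T := fun i : nat => f`_i * x ^+ i.
set R0 := \sum_(i < size f | (i != j :> nat) && (i != s :> nat)) T i.
set R1 := \sum_(i < size f | (i != j :> nat) && (i != s :> nat)) T i *+ i.
have hR0 : vge v (val x j + 1) R0.
  apply: vge_sum => i /andP [h1 h2]; apply: vge_term => // hi.
  by rewrite lezD1; apply: edge_lt he hi h1 h2.
have hR1 : vge v (val x j + 1) R1.
  apply: vge_sum => i /andP [h1 h2]; rewrite -mulr_natr.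
  rewrite -[val x j + 1]addr0; apply: vgeM; last exact: vge_nat.
  apply: vge_term => // hi.
  by rewrite lezD1; apply: edge_lt he hi h1 h2.
have hf : T j + T s = - R0.
  move: hr; rewrite /root horner_coef (sum2 (fun i => T i) hjn hsn hjs') -/R0.
  by rewrite addr_eq0 => /eqP.
rewrite (sum2 (fun i => T i *+ i) hjn hsn hjs') -/R1.
have -> : T j *+ j + T s *+ s = T s *+ (s - j) + (T j + T s) *+ j.
  rewrite mulrnDl addrCA -mulrnDr subnK //; exact: ltnW.
rewrite hf -!addrA.
have hnz := vnat_coprime hp.
have ha : T s *+ (s - j) != 0.
  by rewrite -mulr_natr mulf_neq0 ?hnz.1 // mulf_neq0 ?expf_neq0.
apply: key_neq0 => //.
have -> : v (T s *+ (s - j)) = val x j.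
  by rewrite -mulr_natr (v_mul HK) ?mulf_neq0 ?expf_neq0 ?hnz.1 // hnz.2 addr0 vterm.
apply: vgeD; first by rewrite -mulr_natr -[_ + 1]addr0; apply: vgeM; [apply: vgeN | apply: vge_nat].
exact: vgeD.
Qed.


Lemma exmin_int (l : seq nat) (g : nat -> int) : l != [::] ->
  exists2 j, j \in l & forall i, i \in l -> g j <= g i.
Proof.
elim: l => [//|a l IH] _.
case: (eqVneq l [::]) => [->|hl].
  by exists a; rewrite ?inE // => i; rewrite inE => /eqP ->.
have [j hj hmin] := IH hl.
case: (lerP (g a) (g j)) => hc.
  exists a; rewrite ?inE ?eqxx // => i; rewrite inE => /orP [/eqP ->//|hi].
  exact: le_trans hc (hmin i hi).
exists j; rewrite ?inE ?hj ?orbT // => i; rewrite inE => /orP [/eqP ->|hi].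
  exact: ltW.
exact: hmin.
Qed.

Lemma exmax_nat (l : seq nat) : l != [::] ->
  exists2 j, j \in l & forall i, i \in l -> (i <= j)%N.
Proof.
move=> hl; have [j hj h] := exmin_int (fun i => - (i%:Z)) hl.
by exists j => // i /h; rewrite lerN2 lez_nat.
Qed.

Lemma exists_edge (Hreg : regular v p f) x : f != 0 -> x != 0 -> root f x ->
  exists j s, edgeb x j s.
Proof.
move=> hf hx hr.
set sup := [seq i <- iota 0 (size f) | f`_i != 0].
have memsup i : (i \in sup) = (f`_i != 0).
  rewrite mem_filter mem_iota add0n andbC; case: (eqVneq f`_i 0) => /= hi.
  by rewrite andbF. by rewrite coef_lt_size.
have hsup : sup != [::].
  apply/eqP => h; have : (size f).-1 \in sup.
    by rewrite memsup -lead_coefE lead_coef_eq0.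
  by rewrite h.
have [j0 hj0 hmin] := exmin_int (val x) hsup.
set m := val x j0.
set M := [seq i <- sup | val x i == m].
have memM i : (i \in M) = (f`_i != 0) && (val x i == m).
  by rewrite mem_filter memsup andbC.
have hM : M != [::].
  apply/eqP => h; have : j0 \in M by rewrite memM -memsup hj0 eqxx.
  by rewrite h.
have [j hjM hjmin] := exmin_int (fun i => i%:Z) hM.
have [s hsM hsmax] := exmax_nat hM.
move: (hjM) (hsM); rewrite !memM => /andP [hj /eqP hjm] /andP [hs /eqP hsm].
have hex : has (fun i => i != j) M.
  apply/negPn/negP => hn.
  have hall : forall i, f`_i != 0 -> i != j -> val x j < val x i.
    move=> i hi hij; have := hmin i; rewrite memsup => /(_ hi).
    rewrite -/m le_eqVlt => /orP [/eqP hm|]; last by rewrite hjm.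
    have : has (fun i => i != j) M.
      by apply/hasP; exists i => //; rewrite memM hi -hm eqxx.
    by rewrite (negbTE hn).
  have hjn := coef_lt_size hj.
  have hne : f`_j * x ^+ j +
      \sum_(i < size f | i != Ordinal hjn) f`_i * x ^+ i != 0.
    apply: key_neq0; first by rewrite mulf_neq0 ?expf_neq0.
    rewrite vterm //; apply: vge_sum => i hi; apply: vge_term => // hfi.
    rewrite lezD1; apply: hall => //.
  by move: hr; rewrite /root horner_coef (bigD1 (Ordinal hjn)) //= (negbTE hne).
have [i0 hi0M hi0j] := hasP hex.
have hjs : (j < s)%N.
  have := hjmin i0 hi0M; rewrite lez_nat => hji0.
  have := hsmax i0 hi0M; apply: leq_trans.
  by rewrite ltn_neqAle eq_sym hi0j hji0.
have hvs : v f`_s + s%:Z * v x = v f`_j + j%:Z * v x by rewrite -/(val x s) -/(val x j) hjm hsm.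
have hle : lower_edge v f j s.
  split => // i hi.
    rewrite /on_or_above; apply: (L_above hvs) => //; rewrite -/(val x i) -/(val x j) hjm.
    by apply: hmin; rewrite memsup.
  rewrite /on_line (L_online _ _ hvs hjs) -/(val x i) -/(val x j) hjm => him.
  have hiM : i \in M by rewrite memM hi him.
  by rewrite -lez_nat hjmin //= hsmax.
have [hA hB] := Hreg j s hle.
exists j, s; apply/and5P; split => //.
  by rewrite hjm hsm.
apply/andP; split => //; apply/allP => i _.
case: (eqVneq f`_i 0) => //= hi; case: (eqVneq i j) => //= hij.
case: (eqVneq i s) => //= his.
rewrite lt_neqAle hjm hmin ?memsup // andbT.
apply/negP => /eqP him.
have : on_line v f j s i.
  by rewrite /on_line (L_online _ _ hvs hjs) -/(val x i) -/(val x j) hjm him.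
by move/(hA i hi) => [] h; [move: hij | move: his]; rewrite h eqxx.
Qed.

Lemma same_val x y j s1 s2 : edgeb x j s1 -> edgeb y j s2 -> v x = v y.
Proof.
move=> ex ey.
have /and5P [h1 hj hs1 /eqP e1 _] := ex.
have /and5P [h2 _ hs2 /eqP e2 _] := ey.
rewrite /val in e1 e2.
case: (eqVneq s1 s2) => [es|hne].
  by rewrite -es in e2; apply: (L_same (esym e1) (esym e2) h1).
have hx2 : val x j < val x s2.
  by apply: edge_lt ex hs2 _ _; rewrite ?(gtn_eqF h2) // eq_sym.
have hy1 : val y j < val y s1.
  by apply: edge_lt ey hs1 _ _; rewrite ?(gtn_eqF h1).
rewrite /val in hx2 hy1.
have c1 := L_cross (esym e2) h2 hx2.
have c2 := L_cross (esym e1) h1 hy1.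
by move: (lt_trans c1 c2); rewrite ltxx.
Qed.

Lemma powdiff x y n : v x = v y -> vge v (v y + 1) (x - y) ->
  vge v (n%:Z * v y + 1) (x ^+ n - y ^+ n).
Proof.
move=> hv hd; elim: n => [|n IH]; first by rewrite !expr0 subrr vge0.
have -> : x ^+ n.+1 - y ^+ n.+1 = (x ^+ n - y ^+ n) * x + y ^+ n * (x - y).
  by rewrite !exprS; ring.
apply: vgeD.
  have -> : n.+1%:Z * v y + 1 = (n%:Z * v y + 1) + v x by rewrite hv; lia.
  by apply: vgeM => //; apply: vgev.
have -> : n.+1%:Z * v y + 1 = n%:Z * v y + (v y + 1) by lia.
by apply: vgeM => //; apply: vgeX; apply: vgev.
Qed.

Lemma Hdiff x y i : v x = v y -> vge v (v y + 1) (x - y) ->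
  vge v (i%:Z * v y + 1)
    (y * (\sum_(k < i) x ^+ (i.-1 - k) * y ^+ k) - y ^+ i *+ i).
Proof.
move=> hv hd.
have -> : y ^+ i *+ i = \sum_(k < i) y ^+ i by rewrite sumr_const card_ord.
rewrite mulr_sumr -sumrB; apply: vge_sum => k _.
have hk : (i.-1 - k + k.+1 = i)%N by have := ltn_ord k; lia.
have -> : y * (x ^+ (i.-1 - k) * y ^+ k) - y ^+ i =
    (x ^+ (i.-1 - k) - y ^+ (i.-1 - k)) * y ^+ k.+1.
  have E : y ^+ i = y ^+ (i.-1 - k) * y ^+ k.+1 by rewrite -exprD hk.
  by rewrite E exprS; ring.
have E2 : i%:Z = (i.-1 - k)%:Z + k.+1%:Z by rewrite -PoszD hk.
have -> : i%:Z * v y + 1 = ((i.-1 - k)%:Z * v y + 1) + (k.+1%:Z * v y).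
  by rewrite E2 mulrDl; ring.
apply: vgeM; first exact: powdiff.
by apply: vgeX; apply: vgev.
Qed.


Lemma uniq_root x y j s : y != 0 -> root f x -> root f y -> edgeb y j s ->
  v x = v y -> vge v (v y + 1) (x - y) -> x = y.
Proof.
move=> hy hrx hry he hv hd.
case: (eqVneq x y) => // hxy; exfalso.
set H := fun i : nat => \sum_(k < i) x ^+ (i.-1 - k) * y ^+ k.
set G := \sum_(i < size f) f`_i * H i.
have hG : (x - y) * G = 0.
  rewrite mulr_sumr.
  have <- : f.[x] - f.[y] = \sum_(i < size f) (x - y) * (f`_i * H i).
    rewrite !horner_coef -sumrB; apply: eq_bigr => i _.
    by rewrite -mulrBr subrXX /H mulrCA.
  by rewrite (eqP hrx) (eqP hry) subrr.
have G0 : G = 0.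
  by move/eqP: hG; rewrite mulf_eq0 subr_eq0 (negbTE hxy) => /eqP.
set E := \sum_(i < size f) f`_i * (y * H i - y ^+ i *+ i).
have hyG : y * G = \sum_(i < size f) (f`_i * y ^+ i) *+ i + E.
  rewrite mulr_sumr /E -big_split /=; apply: eq_bigr => i _.
  by rewrite mulrBr -mulrnAr addrC subrK mulrCA.
have hE : vge v (val y j + 1) E.
  apply: vge_sum => i _.
  case: (eqVneq f`_i 0) => [->|hi]; first by rewrite mul0r vge0.
  apply: (vge_le (M := v f`_i + (i%:Z * v y + 1))).
    by rewrite addrA lerD2r; exact: (edge_le he hi).
  by apply: vgeM; [apply: vgev | apply: Hdiff].
have := nondeg hy hry he hE.
by rewrite -hyG G0 mulr0 eqxx.
Qed.


Lemma xderiv x : f != 0 ->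
  x * (f^`()).[x] = \sum_(i < size f) (f`_i * x ^+ i) *+ i.
Proof.
move=> hf; have hlt := lt_size_deriv hf.
move: hlt; case hs: (size f) => [//|n] hlt.
rewrite (horner_coef_wide x hlt) big_ord_recl /= mulr0n add0r mulr_sumr.
apply: eq_bigr => i _; rewrite coef_deriv /bump /=.
by rewrite mulrnAl mulrnAr mulrCA -exprS.
Qed.

Lemma simple_root x j s : f != 0 -> x != 0 -> root f x -> edgeb x j s ->
  mup x f = 1%N.
Proof.
move=> hf hx hr he.
apply/eqP; rewrite eqn_leq mup_leq // -XsubC_dvd // dvdp_XsubCl hr andbT.
apply/negP => /dvdpP [g hg].
have hd : (f^`()).[x] = 0.
  have -> : f^`() = ('X - x%:P) * (g^`() * ('X - x%:P) + g *+ 2).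
    rewrite hg derivM deriv_exp derivXsubC mul1r expr1 /=.
    rewrite [RHS]mulrDr (mulrCA ('X - x%:P) (g^`())) -expr2 !mulrnAr (mulrC g).
    done.
  by rewrite hornerM hornerXsubC subrr mul0r.
have := nondeg hx hr he (vge0 _).
by rewrite addr0 -xderiv // hd mulr0 eqxx.
Qed.


Definition keyb x j := has (edgeb x j) (iota 0 (size f)).

Lemma edge_keyb x j s : edgeb x j s -> keyb x j.
Proof.
move=> he; apply/hasP; exists s => //.
have /and5P [_ _ hs _ _] := he.
by rewrite mem_iota add0n coef_lt_size.
Qed.

Lemma vdiv y x : x != 0 -> y != 0 -> v y = v x -> v (y / x) = 0.
Proof.
move=> hx hy hv; rewrite (v_mul HK hy (invr_neq0 hx)) vV // hv subrr //.
Qed.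

Lemma per_key j (l : seq K) : uniq l ->
  (forall y, y \in l -> [/\ y != 0, root f y & keyb y j]) -> (size l <= q - 1)%N.
Proof.
case: l => [//|x0 l'] hu hall.
set l := x0 :: l' in hu hall *.
have [r [hsz _ _ hcov]] := residue_card HK.
have [hx0 _ /hasP [s0 _ he0]] := hall x0 (mem_head _ _).
have hvy y : y \in l -> v y = v x0.
  by move=> /hall [_ _ /hasP [s1 _ he1]]; apply: same_val he1 he0.
have hA y : y \in l -> inA v (y / x0).
  move=> hy; have [hy0 _ _] := hall y hy.
  by rewrite /inA /vge vdiv // ?hvy // lexx orbT.
set rho := fun y => find (fun b => inM v (y / x0 - b)) r.
set rho0 := find (fun b => inM v (0 - b)) r.
have has0 : has (fun b => inM v (0 - b)) r by apply: hcov; rewrite /inA vge0.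
have hrho0 : (rho0 < q)%N by rewrite -hsz -has_find.
set T := [seq i <- iota 0 q | i != rho0].
have hsubT : {subset map rho l <= T}.
  move=> i /mapP [y hy ->]; rewrite mem_filter mem_iota add0n.
  have hh := hcov _ (hA y hy).
  have hlt : (rho y < q)%N by rewrite -hsz -has_find.
  apply/andP; split; last by rewrite hlt. apply/eqP => heq.
  have h1 := nth_find 0 hh; have h2 := nth_find 0 has0.
  rewrite -/(rho y) -/rho0 heq in h1.
  have : inM v (y / x0) by have := vgeB h1 h2; rewrite sub0r opprK subrK.
  have [hy0 _ _] := hall y hy.
  by rewrite /inM /vge mulf_eq0 invr_eq0 (negbTE hy0) (negbTE hx0) vdiv // ?hvy.
have hinj : {in l &, injective rho}.
  move=> y1 y2 hy1 hy2 heq.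
  have hh1 := nth_find 0 (hcov _ (hA y1 hy1)).
  have hh2 := nth_find 0 (hcov _ (hA y2 hy2)).
  rewrite -/(rho y1) heq in hh1; rewrite -/(rho y2) in hh2.
  have hd : inM v (y1 / x0 - y2 / x0).
    by have := vgeB hh1 hh2; rewrite opprB addrA subrK.
  have [hy10 hr1 _] := hall y1 hy1.
  have [hy20 hr2 /hasP [s2 _ he2]] := hall y2 hy2.
  apply: (uniq_root hy20 hr1 hr2 he2); first by rewrite !hvy.
  have -> : y1 - y2 = x0 * (y1 / x0 - y2 / x0).
    by rewrite mulrBr (mulrCA x0 y1) (mulrCA x0 y2) mulfV // !mulr1.
  by rewrite (hvy y2 hy2); apply: vgeM; [apply: vgev | exact: hd].
have hmu : uniq (map rho l) by rewrite (map_inj_in_uniq hinj).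
have := uniq_leq_size hmu hsubT.
rewrite size_map => /leq_trans; apply.
rewrite size_filter.
have := count_predC (pred1 rho0) (iota 0 q).
rewrite size_iota (count_uniq_mem _ (iota_uniq 0 q)) mem_iota add0n hrho0 /=.
have -> : count (predC (pred1 rho0)) (iota 0 q) = count (fun i => i != rho0) (iota 0 q) by [].
lia.
Qed.


Lemma count_cover (T : eqType) (l : seq T) (S : seq nat) (P : T -> nat -> bool) :
  (forall x, x \in l -> has (P x) S) ->
  (size l <= \sum_(j <- S) count (fun x => P x j) l)%N.
Proof.
elim: l => [|x l IH] h /=; first by [].
have -> : \sum_(j <- S) count (fun x0 => P x0 j) (x :: l) =
    (\sum_(j <- S) P x j + \sum_(j <- S) count (fun x0 => P x0 j) l)%N.
  by rewrite -big_split /=.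
rewrite -add1n; apply: leq_add; last by apply: IH => y hy; apply: h; rewrite inE hy orbT.
have /hasP [j hj hP] := h x (mem_head _ _).
by rewrite (big_rem j hj) /= hP.
Qed.

Lemma sum_bound (S : seq nat) (F : nat -> nat) c :
  (forall j, j \in S -> F j <= c)%N -> (\sum_(j <- S) F j <= size S * c)%N.
Proof.
elim: S => [|a S IH] h; first by rewrite big_nil.
rewrite big_cons /= mulSn; apply: leq_add; first by apply: h; rewrite mem_head.
by apply: IH => j hj; apply: h; rewrite inE hj orbT.
Qed.

Lemma main_count (Hreg : regular v p f) t :
  count (fun c : K => c != 0) (polyseq f) = t.+1 -> f != 0 ->
  forall l : seq K, uniq l -> all (fun x => (x != 0) && root f x) l ->
     (size l <= t * (q - 1))%N.
Proof.
move=> Ht hf l hu hall.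
set S := [seq i <- iota 0 (size f).-1 | f`_i != 0].
have hS : size S = t.
  move: Ht; rewrite -(mkseq_nth 0 f) /mkseq count_map size_filter.
  have hsz : size f = ((size f).-1).+1 by rewrite prednK // size_poly_gt0.
  rewrite {1}hsz -addn1 iotaD count_cat /= add0n.
  rewrite -lead_coefE lead_coef_eq0 hf /= addn1 => /eqP.
  by rewrite eqSS => /eqP.
apply: (@leq_trans (\sum_(j <- S) count (fun x => keyb x j) l)).
  apply: count_cover => x hx.
  move/allP: hall => /(_ x hx) /andP [hx0 hr].
  have [j [s he]] := exists_edge Hreg hf hx0 hr.
  apply/hasP; exists j; last exact: edge_keyb he.
  have /and5P [hjs hj hs _ _] := he.
  rewrite mem_filter hj mem_iota add0n /=.
  apply: leq_trans hjs _; rewrite -ltnS prednK; [exact: coef_lt_size | by rewrite size_poly_gt0].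
rewrite -hS; apply: sum_bound => j _.
rewrite -size_filter; apply: (per_key (j := j)); first by rewrite filter_uniq.
move=> y; rewrite mem_filter => /andP [hk hy].
by move/allP: hall => /(_ y hy) /andP [-> ->].
Qed.

End Poly. End Val.

Unset Implicit Arguments.
Theorem corollary4p7 (K : fieldType) (v : K -> int) (p q : nat)
    (HK : complete_dvf v p q) (f : {poly K}) (t : nat)
    (Hreg : regular v p f)
    (Hterms : count (fun c : K => c != 0) (polyseq f) = t.+1) :
  (forall s : seq K, uniq s -> all (fun x => (x != 0) && root f x) s ->
     (size s <= t * (q - 1))%N)
  /\ (forall x : K, x != 0 -> root f x -> mup x f = 1%N).
Proof.
have hf : f != 0.
  by apply/eqP => h; move: Hterms; rewrite h polyseq0.
split; first exact: (main_count HK Hreg Hterms hf).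
move=> x hx hr.
have [j [s he]] := exists_edge HK Hreg hf hx hr.
have := simple_root HK hf hx hr he. done.
Qed.
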